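(* For every integer $n>24$, the generalized Petersen graph $GP(n,4)$ is not $2$-distance-balanced.
   Context: For a connected graph $G$ and $x,y\in V(G)$, $d_G(x,y)$ denotes the distance. Let $W_{xy}=\{w\in V(G): d_G(w,x)<d_G(w,y)\}$. $G$ is called $\ell$-distance-balanced if $|W_{xy}|=|W_{yx}|$ for every pair $x,y\in V(G)$ with $d_G(x,y)=\ell$. For integers $n\ge 3$ and $1\le k<n/2$, the generalized Petersen graph $GP(n,k)$ has vertex set $\{u_i: i\in\mathbb{Z}_n\}\cup\{v_i: i\in\mathbb{Z}_n\}$ and edge set $\{u_iu_{i+1}: i\in\mathbb{Z}_n\}\cup\{v_iv_{i+k}: i\in\mathbb{Z}_n\}\cup\{u_iv_i: i\in\mathbb{Z}_n\}$. *)

(* Defs.v *)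
From mathcomp Require Import all_boot.
Set Implicit Arguments. Unset Strict Implicit. Unset Printing Implicit Defensive.

Fixpoint ball (T : finType) (e : rel T) (x : T) (m : nat) : {set T} :=
  match m with
  | 0 => [set x]
  | m'.+1 => ball e x m' :|: [set z | [exists y in ball e x m', e y z]]
  end.

(* Graph distance: the least m such that y is within m steps of x.
   (For a connected graph on T this is the usual distance, which is < #|T|;
   for unreachable pairs it returns #|T|, which never matters here since
   GP(n,k) is connected.) *)
Definition gdist (T : finType) (e : rel T) (x y : T) : nat :=
  find (fun m => y \in ball e x m) (iota 0 #|T|).

Definition Wset (T : finType) (e : rel T) (x y : T) : {set T} :=
  [set w | gdist e w x < gdist e w y].

Definition dist_balanced (T : finType) (e : rel T) (l : nat) : Prop :=
  forall x y : T, gdist e x y = l -> #|Wset e x y| = #|Wset e y x|.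

(* Generalized Petersen graph GP(n,k): vertex (false, i) is u_i, (true, i) is v_i,
   indices taken in Z_n. *)
Definition GPvert (n : nat) : finType := (bool * 'I_n)%type.

Definition GPadj (n k : nat) : rel (GPvert n) :=
  fun a b =>
    let i := nat_of_ord a.2 in
    let j := nat_of_ord b.2 in
    match a.1, b.1 with
    | false, false => ((i + 1) %% n == j) || ((j + 1) %% n == i)
    | true, true   => ((i + k) %% n == j) || ((j + k) %% n == i)
    | _, _         => i == j
    end.
Arguments GPadj : clear implicits.

(* Main.v *)
Require Import Defs.
From mathcomp Require Import all_boot.
From Stdlib Require Import ZArith Lia.
From mathcomp Require Import all_boot zify.
Set Implicit Arguments. Unset Strict Implicit. Unset Printing Implicit Defensive.

Section Generic.
Variables (T : finType) (e : rel T).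

Lemma ball_walk x m z :
  z \in ball e x m <-> exists p, [/\ path e x p, last x p = z & size p <= m].
Proof.
elim: m z => [|m IH] z /=.
  rewrite inE; split => [/eqP ->|[p [_ <- sp]]]; first by exists [::].
  by case: p sp.
rewrite inE; split.
  case/orP => [/IH [p [pp lp sp]]|].
    by exists p; split => //; apply: leqW.
  rewrite inE => /existsP [y /andP [/IH [p [pp lp sp]] eyz]].
  exists (rcons p z); rewrite rcons_path last_rcons size_rcons pp lp eyz; split => //.
case=> p [pp lp sp]; apply/orP.
case: (ltnP (size p) m.+1) => [sm|]; first by left; apply/IH; exists p.
move: pp lp sp; case/lastP: p => [//|p' z'].
rewrite rcons_path last_rcons size_rcons => /andP [pp ez] <- sp1 sp2.
right; rewrite inE; apply/existsP; exists (last x p'); rewrite ez andbT.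
by apply/IH; exists p'; split => //; rewrite -ltnS.
Qed.

Lemma ball_cand (C : T -> nat -> Prop) t :
  (forall w y m, e w y -> C y m -> C w m.+1) ->
  (forall w m, C w m.+1 -> w = t \/ exists y, e w y /\ C y m) ->
  (forall w, C w 0 -> w = t) -> C t 0 ->
  (forall w m, C w m -> C w m.+1) ->
  forall w m, t \in ball e w m <-> C w m.
Proof.
move=> L D D0 Ct M w m; rewrite ball_walk; split.
  case=> p [pp lp sp].
  have mono : forall a b w, a <= b -> C w a -> C w b.
    move=> a b w' /subnKC <-; elim: (b - a) => [|c IHc]; rewrite ?addn0 // addnS => Ha.
    by apply: M; apply: IHc.
  apply: (mono _ _ _ sp); elim: p w pp lp {sp} => [|y p IHp] w /=; first by move=> _ ->.
  by case/andP => ewy pp lp; apply: (L _ y) => //; apply: IHp.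
elim: m w => [|m IH] w Cw.
  by exists [::]; rewrite (D0 _ Cw).
case: (D _ _ Cw) => [->|[y [ewy Cy]]]; first by exists [::].
have [p [pp lp sp]] := IH _ Cy.
by exists (y :: p); rewrite /= ewy pp lp.
Qed.

Lemma find_iota_thr (P : pred nat) d N :
  (forall m, P m = (d <= m)) -> d < N -> find P (iota 0 N) = d.
Proof.
move=> HP dN; have -> : N = d + (N - d).-1.+1 by lia.
rewrite iotaD find_cat size_iota.
have -> : has P (iota 0 d) = false.
  by apply/hasP => [[x]]; rewrite mem_iota HP; lia.
by rewrite add0n /= HP leqnn addn0.
Qed.

Lemma gdist_thr w t d :
  (forall m, t \in ball e w m <-> d <= m) -> d < #|T| -> gdist e w t = d.
Proof.
move=> H dN; apply: find_iota_thr => // m.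
by apply/idP/idP => /H.
Qed.

End Generic.

Definition h (j : nat) : nat := j %/ 4 + minn (j %% 4) (5 - j %% 4).
Definition HH n j := minn (h j) (h (n - j)).
Definition f4 n x := if x %% 4 == 0 then x %/ 4 else n.
Definition C4 n j := minn (f4 n j) (f4 n (n - j)).
Definition Dcore (tv s : bool) n j :=
  if tv then (if s then minn (C4 n j) (HH n j + 2) else HH n j + 1)
  else (if s then HH n j + 1 else minn (minn j (n - j)) (HH n j + 2)).

Definition costle (tv s : bool) (a b m : Z) : Prop :=
  match tv, s with
  | false, false => (b = 0 /\ Z.abs a <= m) \/ Z.abs a + Z.abs b + 2 <= m
  | false, true => Z.abs a + Z.abs b + 1 <= m
  | true, true => (a = 0 /\ Z.abs b <= m) \/ Z.abs a + Z.abs b + 2 <= m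
  | true, false => Z.abs a + Z.abs b + 1 <= m
  end%Z.

Lemma core_le tv s n j m a b k : 25 <= n -> j < n ->
  Z.of_nat j = (a + 4 * b + k * Z.of_nat n)%Z -> costle tv s a b (Z.of_nat m) ->
  Dcore tv s n j <= m.
Proof.
move=> n25 jn E C.
have [mn|nm] := leqP n m.
  rewrite /Dcore /C4 /HH /f4 /h; case: tv s {C} => [] []; repeat (case: ifP => [/eqP ?|/negbT/eqP ?]); lia.
have kb : (-4 <= k <= 4)%Z.
  case: tv s C => [] [] /= C; nia.
have : (k = -4 \/ k = -3 \/ k = -2 \/ k = -1 \/ k = 0 \/ k = 1 \/ k = 2 \/ k = 3 \/ k = 4)%Z by lia.
move: C; rewrite /Dcore /C4 /HH /f4 /h.
case: tv s => [] [] /=; repeat (case: ifP => [/eqP ?|/negbT/eqP ?]); move=> C K; (case: K => [->|[->|[->|[->|[->|[->|[->|[->|->]]]]]]]] in E; lia).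
Qed.

Lemma hw x : exists a b : Z, Z.of_nat x = (a + 4*b)%Z /\ (Z.abs a + Z.abs b = Z.of_nat (h x))%Z.
Proof.
rewrite /h; have [r2|r3] := leqP (x %% 4) 2.
  exists (Z.of_nat (x %% 4)), (Z.of_nat (x %/ 4)); lia.
exists (-1)%Z, (Z.of_nat (x %/ 4) + 1)%Z; lia.
Qed.

Lemma HHw n j : j <= n -> exists a b k : Z, Z.of_nat j = (a + 4*b + k * Z.of_nat n)%Z /\
   (Z.abs a + Z.abs b = Z.of_nat (HH n j))%Z.
Proof.
move=> jn; have [a1 [b1 [E1 C1]]] := hw j; have [a2 [b2 [E2 C2]]] := hw (n - j).
rewrite /HH; have [le|lt] := leqP (h j) (h (n - j)).
  exists a1, b1, 0%Z; lia.
exists (-a2)%Z, (-b2)%Z, 1%Z; lia.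
Qed.

Lemma core_ge tv s n j m : 25 <= n -> j < n -> Dcore tv s n j <= m ->
  exists a b k : Z, Z.of_nat j = (a + 4 * b + k * Z.of_nat n)%Z /\ costle tv s a b (Z.of_nat m).
Proof.
move=> n25 jn; have [a [b [k [E C]]]] := HHw (ltnW jn).
have hb : HH n j + 2 <= n by rewrite /HH /h; lia.
case: tv s => [] []; cbn [Dcore costle].
- rewrite geq_min => /orP[|H]; last by exists a, b, k; split => //; right; lia.
  rewrite /C4 /f4 geq_min => /orP[]; case: ifP => [/eqP r0 H|_ H].
  + exists 0%Z, (Z.of_nat (j %/ 4)), 0%Z; split; [lia| left; lia].
  + exists a, b, k; split => //; right; lia.
  + exists 0%Z, (- Z.of_nat ((n - j) %/ 4))%Z, 1%Z; split; [lia| left; lia].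
  + exists a, b, k; split => //; right; lia.
- move=> H; exists a, b, k; split => //; lia.
- move=> H; exists a, b, k; split => //; lia.
- rewrite !geq_min => /orP[/orP[]|] H.
  + exists (Z.of_nat j), 0%Z, 0%Z; split; [lia|left; lia].
  + exists (- Z.of_nat (n - j))%Z, 0%Z, 1%Z; split; [lia|left; lia].
  + exists a, b, k; split => //; right; lia.
Qed.


Section GP.
Variables (n : nat) (n25 : 24 < n).
Let n0 : 0 < n. Proof. by apply: leq_trans n25. Qed.

Definition mk (k : nat) : 'I_n := Ordinal (ltn_pmod k n0).

Lemma val_mk k : k < n -> val (mk k) = k.
Proof. by move=> kn; rewrite /= modn_small. Qed.

Definition cand (tv : bool) (p0 : nat) (w : GPvert n) (m : nat) : Prop :=
  exists a b k : Z, Z.of_nat (val w.2) = (Z.of_nat p0 + a + 4 * b + k * Z.of_nat n)%Z /\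
    costle tv w.1 a b (Z.of_nat m).

Lemma modZ x : x < 2 * n -> exists c : Z, Z.of_nat (x %% n) = (Z.of_nat x + c * Z.of_nat n)%Z.
Proof.
move=> x2; case: (ltnP x n) => xn.
  by exists 0%Z; rewrite modn_small //; lia.
exists (-1)%Z; have -> : x = (x - n) + n by lia.
rewrite modnDr modn_small; lia.
Qed.

Lemma cand_D tv p0 w m : p0 < n ->
  cand tv p0 w m <-> Dcore tv w.1 n ((val w.2 + n - p0) %% n) <= m.
Proof.
case: w => s i p0n /=; have iL := ltn_ord i.
have [c Ec] : exists c : Z, Z.of_nat ((i + n - p0) %% n) = (Z.of_nat (i + n - p0) + c * Z.of_nat n)%Z.
  by apply: modZ; lia.
have jn : (i + n - p0) %% n < n by apply: ltn_pmod.
move: ((i + n - p0) %% n) jn Ec => j jn Ec.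
split.
  case=> a [b [k [E C]]]; cbn [fst snd] in E; cbn [fst snd] in C; apply: (core_le (a := a) (b := b) (k := (k + 1 + c)%Z)) => //.
  have E' : Z.of_nat i = (Z.of_nat p0 + a + 4 * b + k * Z.of_nat n)%Z := E; nia.
case/(core_ge n25 jn) => a [b [k [E C]]].
exists a, b, (k - 1 - c)%Z; cbn [fst snd]; split => //.
suff E' : Z.of_nat i = (Z.of_nat p0 + a + 4 * b + (k - 1 - c) * Z.of_nat n)%Z by exact: E'.
nia.
Qed.


Lemma candE tv p0 s (i : 'I_n) m : cand tv p0 (s, i) m <->
  exists a b k : Z, Z.of_nat i = (Z.of_nat p0 + a + 4 * b + k * Z.of_nat n)%Z /\
    costle tv s a b (Z.of_nat m).
Proof. exact: iff_refl. Qed.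

Ltac cst := match goal with C : costle ?tv _ _ _ _ |- _ =>
  case: tv C => C; cbn [costle] in C |- *; lia end.

Lemma candL tv p0 w y m : GPadj n 4 w y -> cand tv p0 y m -> cand tv p0 w m.+1.
Proof.
case: w y => [s i] [t j]; rewrite !candE.
have iL := ltn_ord i; have jL := ltn_ord j.
case: s; case: t => Hadj [a [b [k [E C]]]]; rewrite /GPadj /= in Hadj.
- case/orP: Hadj => /eqP Hij.
  + have [c Ec] := modZ (x := i + 4) ltac:(lia); rewrite Hij in Ec.
    exists a, (b - 1)%Z, (k - c)%Z; split; [nia|cst].
  + have [c Ec] := modZ (x := j + 4) ltac:(lia); rewrite Hij in Ec.
    exists a, (b + 1)%Z, (k + c)%Z; split; [nia|cst].
- move/eqP: Hadj => Hij; exists a, b, k; split; [nia|cst].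
- move/eqP: Hadj => Hij; exists a, b, k; split; [nia|cst].
- case/orP: Hadj => /eqP Hij.
  + have [c Ec] := modZ (x := i + 1) ltac:(lia); rewrite Hij in Ec.
    exists (a - 1)%Z, b, (k - c)%Z; split; [nia|cst].
  + have [c Ec] := modZ (x := j + 1) ltac:(lia); rewrite Hij in Ec.
    exists (a + 1)%Z, b, (k + c)%Z; split; [nia|cst].
Qed.


Ltac cst' := cbn [costle] in *; lia.

Lemma tgt (tv : bool) (p0 : nat) (s : bool) (i : 'I_n) (k : Z) : p0 < n -> s = tv ->
  Z.of_nat i = (Z.of_nat p0 + k * Z.of_nat n)%Z -> (s, i) = (tv, mk p0).
Proof.
move=> p0n -> E; have iL := ltn_ord i.
have k0 : k = 0%Z by nia.
congr pair; apply: ord_inj; rewrite val_mk //; lia.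
Qed.

Lemma modZ' x : x < 2 * n -> exists c : Z, Z.of_nat (mk x) = (Z.of_nat x + c * Z.of_nat n)%Z.
Proof. exact: modZ. Qed.

Lemma adj_up_u (i : 'I_n) : GPadj n 4 (false, i) (false, mk (i + 1)).
Proof. by rewrite /GPadj /= eqxx. Qed.
Lemma adj_up_v (i : 'I_n) : GPadj n 4 (true, i) (true, mk (i + 4)).
Proof. by rewrite /GPadj /= eqxx. Qed.
Lemma adj_dn_u (i : 'I_n) : GPadj n 4 (false, i) (false, mk (i + n - 1)).
Proof.
have iL := ltn_ord i.
rewrite /GPadj /= modnDml; apply/orP; right.
have -> : i + n - 1 + 1 = i + n by lia.
by rewrite modnDr modn_small.
Qed.
Lemma adj_dn_v (i : 'I_n) : GPadj n 4 (true, i) (true, mk (i + n - 4)).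
Proof.
have iL := ltn_ord i.
rewrite /GPadj /= modnDml; apply/orP; right.
have -> : i + n - 4 + 4 = i + n by lia.
by rewrite modnDr modn_small.
Qed.
Lemma adj_sp_u (i : 'I_n) : GPadj n 4 (false, i) (true, i).
Proof. by rewrite /GPadj /= eqxx. Qed.
Lemma adj_sp_v (i : 'I_n) : GPadj n 4 (true, i) (false, i).
Proof. by rewrite /GPadj /= eqxx. Qed.

Lemma candD (tv : bool) (p0 : nat) (w : GPvert n) m : p0 < n -> cand tv p0 w m.+1 ->
  w = (tv, mk p0) \/ exists y, GPadj n 4 w y /\ cand tv p0 y m.
Proof.
case: w => s i p0n; rewrite candE => [[a [b [k [E C]]]]].
have iL := ltn_ord i.
have [c1 E1] := modZ' (x := i + 1) ltac:(lia).
have [c2 E2] := modZ' (x := i + n - 1) ltac:(lia).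
have [c3 E3] := modZ' (x := i + 4) ltac:(lia).
have [c4 E4] := modZ' (x := i + n - 4) ltac:(lia).
have [a0|[ap|an]] : (a = 0 \/ 0 < a \/ a < 0)%Z by lia.
all: have [b0|[bp|bn]] : (b = 0 \/ 0 < b \/ b < 0)%Z by lia.
all: case: tv C; case: s E => E C.
all: try (left; apply: (tgt (k := k)) => //; lia).
all: try (by cbn [costle] in C; lia).
all: right.
all: first [
  (eexists; split; [exact: adj_sp_u|]; rewrite candE; exists a, b, k; split; [lia|cst'])
| (eexists; split; [exact: adj_sp_v|]; rewrite candE; exists a, b, k; split; [lia|cst'])
| (eexists; split; [exact: adj_up_u|]; rewrite candE; exists (a+1)%Z, b, (k+c1)%Z; split; [nia|cst'])
| (eexists; split; [exact: adj_dn_u|]; rewrite candE; exists (a-1)%Z, b, (k+c2+1)%Z; split; [nia|cst'])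
| (eexists; split; [exact: adj_up_v|]; rewrite candE; exists a, (b+1)%Z, (k+c3)%Z; split; [nia|cst'])
| (eexists; split; [exact: adj_dn_v|]; rewrite candE; exists a, (b-1)%Z, (k+c4+1)%Z; split; [nia|cst'])
| idtac ].
Qed.

Lemma cand0 (tv : bool) (p0 : nat) (w : GPvert n) : p0 < n -> cand tv p0 w 0 -> w = (tv, mk p0).
Proof.
case: w => s i p0n; rewrite candE => [[a [b [k [E C]]]]].
have [a0 b0] : a = 0%Z /\ b = 0%Z by case: tv s C => [] [] C; cbn [costle] in C; lia.
have st : s = tv by case: tv s C => [] [] C; cbn [costle] in C; lia.
apply: (tgt (k := k)) => //; lia.
Qed.

Lemma candT (tv : bool) (p0 : nat) : p0 < n -> cand tv p0 (tv, mk p0) 0.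
Proof.
move=> p0n; rewrite candE; exists 0%Z, 0%Z, 0%Z; rewrite val_mk //; split; first lia.
by case: tv; cbn [costle]; lia.
Qed.

Lemma candM (tv : bool) (p0 : nat) w m : cand tv p0 w m -> cand tv p0 w m.+1.
Proof.
case: w => s i; rewrite !candE => [[a [b [k [E C]]]]]; exists a, b, k; split => //.
by case: tv s C => [] [] C; cbn [costle] in C |- *; lia.
Qed.

Lemma gdist_D (tv : bool) (p0 : nat) (w : GPvert n) : p0 < n ->
  gdist (GPadj n 4) w (tv, mk p0) = Dcore tv w.1 n ((val w.2 + n - p0) %% n).
Proof.
move=> p0n; apply: gdist_thr.
  move=> m; rewrite -cand_D //; apply: (ball_cand (C := cand tv p0)).
  - exact: candL.
  - by move=> w' m'; apply: candD.
  - by move=> w'; apply: cand0.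
  - exact: candT.
  - exact: candM.
have jn : (val w.2 + n - p0) %% n < n by apply: ltn_pmod.
move: ((val w.2 + n - p0) %% n) jn => j jn.
rewrite card_prod card_bool card_ord /Dcore /C4 /HH /f4 /h.
case: tv w.1 => [] []; repeat (case: ifP => [/eqP ?|/negbT/eqP ?]); lia.
Qed.


End GP.


Definition DX n (s : bool) i := Dcore false s n i.
Definition DY n (s : bool) i := Dcore true s n (if 4 <= i then i - 4 else i + n - 4).

Lemma hS4 x : h (x + 4) = (h x).+1.
Proof. rewrite /h; lia. Qed.

Lemma F4 n i : 32 < n -> 5 <= i < n -> DX n true i < DY n true i ->
  DY n false (n + 4 - i) < DX n false (n + 4 - i).
Proof.
move=> n33 /andP[i5 iL].
rewrite /DX /DY /Dcore /C4 /HH (_ : 4 <= i = true); last by lia.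
rewrite (_ : 4 <= n + 4 - i = true); last by lia.
rewrite (_ : n + 4 - i - 4 = n - i); last by lia.
rewrite (_ : n - (n - i) = i); last by lia.
rewrite (_ : n - (n + 4 - i) = (i - 4)); last by lia.
rewrite (_ : n + 4 - i = (n - i) + 4); last by lia.
rewrite (_ : n - (i - 4) = (n - i) + 4); last by lia.
rewrite hS4.
have hb : forall x, 4 * h x <= x + 8 by move=> x; rewrite /h; lia.
have hb2 : forall x, x <= 4 * h x by move=> x; rewrite /h; lia.
have hd : forall x, h x = x %/ 4 + minn (x %% 4) (5 - x %% 4) by [].
have := hd i; have := hd (i - 4); have := hb (n - i); have := hb2 (n - i); have := hb (i - 4); have := hb2 i; have := hb2 (i-4).
rewrite /f4.
repeat case: ifP => _; lia.
Qed.

Lemma h_le x : h x <= x.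
Proof. rewrite /h; lia. Qed.
Lemma h_le2 x : 4 <= x -> h x + 2 <= x.
Proof. rewrite /h; lia. Qed.
Lemma h_lb x : x <= 4 * h x.
Proof. rewrite /h; lia. Qed.

Lemma F1 n i : 32 < n -> i < n -> DX n false i < DY n false i -> i <= 2 \/ n - 3 <= i.
Proof.
move=> n33 iL HX; case: (ltnP i 3) => [|i3]; first by left; lia.
case: (ltnP i (n - 3)) => [iL3|]; last by right.
exfalso; move: HX; case: (ltnP i 4) => [i4|i4].
  have -> : i = 3 by lia.
  rewrite /DX /DY /Dcore /HH /= (_ : n - (3 + n - 4) = 1); last by lia.
  rewrite (_ : 3 + n - 4 = n - 1); last by lia.
  rewrite (_ : h 3 = 2) // (_ : h 1 = 1) //.
  have := h_lb (n - 3); have := h_lb (n - 1).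
  lia.
rewrite /DX /DY /Dcore /HH i4.
rewrite (_ : n - (i - 4) = (n - i) + 4); last by lia.
have e1 : h i = (h (i - 4)).+1 by rewrite -hS4 subnK.
have e2 := hS4 (n - i).
have := h_le i; have := h_le2 (x := n - i) ltac:(lia); have := h_le (i - 4); have := h_le (n - i).
lia.
Qed.

Lemma h_ub x : 4 * h x <= x + 8.
Proof. rewrite /h; lia. Qed.

Definition hbnd x := (x <= 4 * h x) /\ (4 * h x <= x + 8).
Lemma hbndP x : hbnd x. Proof. split; [exact: h_lb|exact: h_ub]. Qed.
Ltac hbounds := repeat match goal with |- context[h ?x] =>
  lazymatch goal with _ : hbnd x |- _ => fail | _ => have := hbndP x; move=> ? end end;
  repeat match goal with H : hbnd _ |- _ => case: H => ?? end.

Lemma hv0 : h 0 = 0. Proof. by []. Qed.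
Lemma hv1 : h 1 = 1. Proof. by []. Qed.
Lemma hv2 : h 2 = 2. Proof. by []. Qed.
Lemma hv3 : h 3 = 2. Proof. by []. Qed.
Lemma hv4 : h 4 = 1. Proof. by []. Qed.
Lemma hv8 : h 8 = 2. Proof. by []. Qed.
Lemma hv12 : h 12 = 3. Proof. by []. Qed.
Lemma hv16 : h 16 = 4. Proof. by []. Qed.
Lemma hv20 : h 20 = 5. Proof. by []. Qed.
Lemma hv24 : h 24 = 6. Proof. by []. Qed.
Lemma hv5 : h 5 = 2. Proof. by []. Qed.
Lemma hv9 : h 9 = 3. Proof. by []. Qed.
Lemma hv13 : h 13 = 4. Proof. by []. Qed.
Lemma hv17 : h 17 = 5. Proof. by []. Qed.
Ltac hconc := rewrite ?subn0 ?hv0 ?hv1 ?hv2 ?hv3 ?hv4 ?hv5 ?hv8 ?hv9 ?hv12 ?hv13 ?hv16 ?hv17 ?hv20 ?hv24 /=.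

Ltac arith := repeat match goal with |- context[?a - (?a - ?b)] =>
  rewrite (_ : a - (a - b) = b); last by lia end.

Ltac pt := rewrite /DX /DY /Dcore /C4 /HH /f4 /=; arith; rewrite /=; hconc;
  repeat (case: ifP => [/eqP ?|/negbT/eqP ?]); hbounds; lia.

Lemma F2 n i : 32 < n -> i < n -> DX n true i < DY n true i -> i = 1 \/ i = 2 \/ 5 <= i.
Proof.
move=> n33 iL; case: (ltnP i 5) => [i5|]; last by right; right.
have : i = 0 \/ i = 1 \/ i = 2 \/ i = 3 \/ i = 4 by lia.
case=> [->|[->|[->|[->|->]]]]; try by [left|right; left]; rewrite ltnNge => /negP [].
- rewrite /DY /= (_ : 0 + n - 4 = n - 4); last by lia.
  pt.
- rewrite /DY /= (_ : 3 + n - 4 = n - 1); last by lia. pt.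
- pt.
Qed.

Lemma F3 n : 32 < n ->
  [/\ DY n true 4 < DX n true 4, DY n true 8 < DX n true 8, DY n true 12 < DX n true 12,
      DY n true 16 < DX n true 16 & DY n true 20 < DX n true 20] /\
  [/\ DY n false 8 < DX n false 8, DY n false 12 < DX n false 12,
      DY n false 16 < DX n false 16 & DY n false 20 < DX n false 20].
Proof.
move=> n33; split; split; pt.
Qed.

Lemma F5 n : 32 < n ->
  [/\ ~~ (DX n true (n - 4) < DY n true (n - 4)), ~~ (DX n true (n - 8) < DY n true (n - 8)),
      ~~ (DX n true (n - 12) < DY n true (n - 12)) & ~~ (DX n true (n - 16) < DY n true (n - 16))].
Proof.
move=> n33; split; rewrite -leqNgt /DY.
- rewrite (_ : 4 <= n - 4 = true); last by lia. rewrite (_ : n - 4 - 4 = n - 8); last by lia. pt.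
- rewrite (_ : 4 <= n - 8 = true); last by lia. rewrite (_ : n - 8 - 4 = n - 12); last by lia. pt.
- rewrite (_ : 4 <= n - 12 = true); last by lia. rewrite (_ : n - 12 - 4 = n - 16); last by lia. pt.
- rewrite (_ : 4 <= n - 16 = true); last by lia. rewrite (_ : n - 16 - 4 = n - 20); last by lia. pt.
Qed.


Lemma card_count n (P : bool -> nat -> bool) :
  #|[set w : GPvert n | P w.1 (nat_of_ord w.2)]| = count (P true) (iota 0 n) + count (P false) (iota 0 n).
Proof.
rewrite -sum1dep_card.
rewrite (eq_bigl (fun p : bool * 'I_n => xpredT p.1 && P p.1 (nat_of_ord p.2))) //.
rewrite -(pair_big_dep xpredT (fun b (j : 'I_n) => P b (val j)) (fun _ _ => 1)).
rewrite big_bool /= -!(big_mkord (fun j => P _ j) (fun _ => 1)) !sum1_count.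
by rewrite /index_iota subn0.
Qed.

Definition cX n := count (fun i => DX n true i < DY n true i) (iota 0 n) +
                   count (fun i => DX n false i < DY n false i) (iota 0 n).
Definition cY n := count (fun i => DY n true i < DX n true i) (iota 0 n) +
                   count (fun i => DY n false i < DX n false i) (iota 0 n).

Lemma small_ok : all (fun n => cX n < cY n) (iota 25 8).
Proof. vm_compute. reflexivity. Qed.

Definition phin n (s : bool) i : bool * nat :=
  if s then (if i == 1 then (false, 16) else if i == 2 then (false, 20) else (false, n + 4 - i))
  else (if i == 0 then (true, 4) else if i == 1 then (true, 8) else if i == 2 then (true, 12)
        else if i == n.-1 then (true, 16) else if i == n - 2 then (false, 8) else (false, 12)).

Definition psin n (s : bool) k : bool * nat :=
  if s then (if k == 4 then (false, 0) else if k == 8 then (false, 1) else if k == 12 then (false, 2)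
             else (false, n.-1))
  else (if k == 8 then (false, n - 2) else if k == 12 then (false, n - 3) else if k == 16 then (true, 1)
        else if k == 20 then (true, 2) else (true, n + 4 - k)).

Ltac ifs := repeat (case: ifP => [/eqP ?|/negbT/eqP ?]).

Lemma phi_ok n s i : 32 < n -> i < n -> DX n s i < DY n s i ->
  [/\ (phin n s i).2 < n,
      DY n (phin n s i).1 (phin n s i).2 < DX n (phin n s i).1 (phin n s i).2,
      psin n (phin n s i).1 (phin n s i).2 = (s, i) & phin n s i != (true, 20)].
Proof.
move=> n33 iL HX; have [[Y4 Y8 Y12 Y16 Y20] [U8 U12 U16 U20]] := F3 n33.
have [N4 N8 N12 N16] := F5 n33.
case: s HX => HX.
- have := F2 n33 iL HX; case=> [->|[->|i5]].
  + by rewrite /phin /psin /=; split => //; lia.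
  + by rewrite /phin /psin /=; split => //; lia.
  have i4 : i <> n - 4 by move=> E; move: N4; rewrite -E HX.
  have i8 : i <> n - 8 by move=> E; move: N8; rewrite -E HX.
  have i12 : i <> n - 12 by move=> E; move: N12; rewrite -E HX.
  have i16 : i <> n - 16 by move=> E; move: N16; rewrite -E HX.
  have Y := F4 n33 (ltac:(lia) : 5 <= i < n) HX.
  rewrite /phin; ifs; try lia.
  rewrite /psin /=; ifs; try lia.
  split => //; [lia|congr pair; lia].
- have := F1 n33 iL HX => Hi.
  have : i = 0 \/ i = 1 \/ i = 2 \/ i = n.-1 \/ i = n - 2 \/ i = n - 3 by lia.
  case=> [->|[->|[->|[->|[->|->]]]]]; rewrite /phin /psin; ifs; rewrite /=; ifs; try lia;
    split => //; lia.
Qed.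

Lemma big_case n (n25 : 24 < n) : 32 < n ->
  #|[set w : GPvert n | DX n w.1 (nat_of_ord w.2) < DY n w.1 (nat_of_ord w.2)]| <
  #|[set w : GPvert n | DY n w.1 (nat_of_ord w.2) < DX n w.1 (nat_of_ord w.2)]|.
Proof.
move=> n33.
set SX := [set w : GPvert n | _]; set SY := [set w : GPvert n | _].
pose f (w : GPvert n) : GPvert n := ((phin n w.1 (nat_of_ord w.2)).1, mk n25 (phin n w.1 (nat_of_ord w.2)).2).
pose g (w : GPvert n) : GPvert n := ((psin n w.1 (nat_of_ord w.2)).1, mk n25 (psin n w.1 (nat_of_ord w.2)).2).
have fg : {in SX, cancel f g}.
  move=> [s i]; rewrite inE /= => HX.
  have [a b c d] := phi_ok n33 (ltn_ord i) HX.
  rewrite /f /g /= (modn_small a) c /=; congr pair; apply: ord_inj => /=; exact: modn_small (ltn_ord i).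
have inj := can_in_inj fg.
pose v20 : GPvert n := (true, mk n25 20).
have sub : f @: SX \subset SY :\ v20.
  apply/subsetP => _ /imsetP [[s i] HX ->]; move: HX; rewrite !inE /= => HX.
  rewrite /f /=; have := phi_ok n33 (ltn_ord i) HX.
  case: (phin n s i) => s' k [a b c d] /=.
  rewrite (modn_small a) b andbT.
  apply/eqP => E; move/eqP: d; apply; move: E; rewrite /v20 => -[-> E]; congr pair.
  have a' : k < n := a; have h20 : 20 < n by lia.
  by move: E; rewrite (modn_small a') (modn_small h20).
have v20S : v20 \in SY.
  rewrite inE /= modn_small; last lia. have [[_ _ _ _ Y20] _] := F3 n33; exact: Y20.
rewrite -(card_in_imset inj).
have := subset_leq_card sub; rewrite (cardsD1 v20 SY) v20S; lia.
Qed.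


Theorem proposition3p2 (n : nat) : 24 < n -> ~ dist_balanced (GPadj n 4) 2.
Proof.
move=> n25 DB.
pose x : GPvert n := (false, mk n25 0). pose y : GPvert n := (true, mk n25 4).
have gx : forall w : GPvert n, gdist (GPadj n 4) w x = DX n w.1 w.2.
  move=> [s i]; rewrite /x gdist_D; last by lia.
  rewrite /DX; congr (Dcore _ _ _ _) => /=.
  by rewrite subn0 modnDr modn_small.
have gy : forall w : GPvert n, gdist (GPadj n 4) w y = DY n w.1 w.2.
  move=> [s i]; rewrite /y gdist_D; last by lia.
  rewrite /DY; congr (Dcore _ _ _ _) => /=.
  have iL := ltn_ord i; case: ifP => h4.
    by rewrite (_ : i + n - 4 = (i - 4) + n) ?modnDr ?modn_small //; lia.
  by rewrite modn_small //; lia.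
have dxy : gdist (GPadj n 4) x y = 2.
  rewrite gy /= modn_small; last by lia.
  rewrite /DY /= (_ : 0 + n - 4 = n - 4); last by lia.
  rewrite /Dcore /HH (_ : n - (n - 4) = 4); last by lia.
  rewrite hv4; have := h_lb (n - 4); lia.
have := DB x y dxy; rewrite /Wset.
have -> : [set w | gdist (GPadj n 4) w x < gdist (GPadj n 4) w y] =
          [set w : GPvert n | DX n w.1 w.2 < DY n w.1 w.2].
  by apply/setP => w; rewrite !inE gx gy.
have -> : [set w | gdist (GPadj n 4) w y < gdist (GPadj n 4) w x] =
          [set w : GPvert n | DY n w.1 w.2 < DX n w.1 w.2].
  by apply/setP => w; rewrite !inE gx gy.
case: (ltnP 32 n) => [n33|n32].
  by have := big_case n25 n33; lia.
rewrite (card_count n (fun s i => DX n s i < DY n s i)) (card_count n (fun s i => DY n s i < DX n s i)).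
have := allP small_ok n; rewrite mem_iota /cX /cY => H; have := H ltac:(lia); lia.
Qed.
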